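(* Let $R$ be the right shift on $\ell^2_{\mathbb{H}}(\mathbb{Z})$ defined by $R(x)=y$ with $y_i=x_{i+1}$ for $i\neq-1$ and $y_{-1}=0$. Then $\partial\sigma_S(R)$ is properly contained in $B_{S,\partial}(R)$.
   Context: $\mathbb{H}$ denotes the quaternions, $Re(q)$ the real part and $|q|$ the norm. $\ell^2_{\mathbb{H}}(\mathbb{Z})=\{x:\mathbb{Z}\to\mathbb{H}:\sum_i|x_i|^2<\infty\}$ is a right quaternionic Hilbert space with $xa=(x_ia)_i$ and $\langle x,y\rangle=\sum_i\overline{x_i}y_i$, equipped with the left multiplication induced by the standard Hilbert basis, i.e. $qx=(qx_i)_i$. $\mathcal{B}=\mathcal{B}(\ell^2_{\mathbb{H}}(\mathbb{Z}))$ (bounded right linear operators with $(qT)x=q(Tx)$, $(Tq)x=T(qx)$, composition, operator norm) is a quaternionic two-sided Banach algebra with unit $\mathbb{I}$, with invertible group $\mathcal{B}^{-1}$. For $T\in\mathcal{B}$, $R_q(T)=T^2-2Re(q)T+|q|^2\mathbb{I}$; $\sigma_S(T)=\{q\in\mathbb{H}:R_q(T)\notin\mathcal{B}^{-1}\}$ with boundary $\partial\sigma_S(T)$ in $\mathbb{H}$; the boundary S-spectrum is $B_{S,\partial}(T)=\{q\in\mathbb{H}:R_q(T)\in\partial(\mathcal{B}\setminus\mathcal{B}^{-1})\}$, where $\partial$ is the topological boundary in $\mathcal{B}$ for the operator norm. *)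

(* Defs.v *)
From Stdlib Require Import Reals ZArith.
From Coquelicot Require Import Coquelicot.
Open Scope R_scope.

Record quat := Quat { qre : R; qi : R; qj : R; qk : R }.

Definition qadd (p q : quat) : quat :=
  Quat (qre p + qre q) (qi p + qi q) (qj p + qj q) (qk p + qk q).
Definition qopp (p : quat) : quat := Quat (- qre p) (- qi p) (- qj p) (- qk p).
Definition qsub (p q : quat) : quat := qadd p (qopp q).
Definition qzero : quat := Quat 0 0 0 0.
Definition qreal (r : R) : quat := Quat r 0 0 0.
Definition qmul (p q : quat) : quat :=
  Quat (qre p * qre q - qi p * qi q - qj p * qj q - qk p * qk q)
       (qre p * qi q + qi p * qre q + qj p * qk q - qk p * qj q)
       (qre p * qj q - qi p * qk q + qj p * qre q + qk p * qi q)
       (qre p * qk q + qi p * qj q - qj p * qi q + qk p * qre q).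
Definition qnorm2 (q : quat) : R := qre q ^ 2 + qi q ^ 2 + qj q ^ 2 + qk q ^ 2.
Definition qnorm (q : quat) : R := sqrt (qnorm2 q).
Definition Req (q : quat) : R := qre q.

Definition hseq := Z -> quat.

(* symmetric partial sums  sum_{i=-n}^{n} |x_i|^2 *)
Definition psum2 (x : hseq) (n : nat) : R :=
  sum_f_R0 (fun k => qnorm2 (x (Z.of_nat k - Z.of_nat n)%Z)) (2 * n).

Definition in_l2 (x : hseq) : Prop := ex_finite_lim_seq (psum2 x).

(* ||x|| = (sum_i |x_i|^2)^(1/2) (meaningful for x in l^2) *)
Definition l2norm (x : hseq) : R := sqrt (real (Lim_seq (psum2 x))).

Definition rscal (x : hseq) (a : quat) : hseq := fun i => qmul (x i) a.
Definition lscal (q : quat) (x : hseq) : hseq := fun i => qmul q (x i).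
Definition sadd (x y : hseq) : hseq := fun i => qadd (x i) (y i).
Definition ssub (x y : hseq) : hseq := fun i => qsub (x i) (y i).

Definition operator := hseq -> hseq.

(* T in B(l^2_H(Z)): maps l^2 into l^2, right linear, bounded.
   Operators are only considered through their action on l^2. *)
Definition bounded_op (T : operator) : Prop :=
  (forall x, in_l2 x -> in_l2 (T x)) /\
  (forall x y a, in_l2 x -> in_l2 y ->
      T (sadd (rscal x a) y) = sadd (rscal (T x) a) (T y)) /\
  (exists C, 0 <= C /\ forall x, in_l2 x -> l2norm (T x) <= C * l2norm x).

Definition op_id : operator := fun x => x.
Definition op_comp (S T : operator) : operator := fun x => S (T x).
Definition op_sub (S T : operator) : operator := fun x => ssub (S x) (T x).
Definition op_add (S T : operator) : operator := fun x => sadd (S x) (T x).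
Definition op_lscal (q : quat) (T : operator) : operator := fun x => lscal q (T x).

Definition opdist_lt (S T : operator) (eps : R) : Prop :=
  exists c, c < eps /\
    forall x, in_l2 x -> l2norm (op_sub S T x) <= c * l2norm x.

Definition invertible (T : operator) : Prop :=
  exists S, bounded_op S /\
    forall x, in_l2 x -> S (T x) = x /\ T (S x) = x.

(* A lies in the topological boundary, in (B, operator norm), of B \ B^{-1}:
   A is in the closure of B \ B^{-1} and in the closure of its complement B^{-1}. *)
Definition in_boundary_noninv (A : operator) : Prop :=
  (forall eps, 0 < eps -> exists S, bounded_op S /\ ~ invertible S /\ opdist_lt S A eps) /\
  (forall eps, 0 < eps -> exists S, bounded_op S /\ invertible S /\ opdist_lt S A eps).

Definition Rq (q : quat) (T : operator) : operator :=
  op_add (op_sub (op_comp T T) (op_lscal (qreal (2 * Req q)) T))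
         (op_lscal (qreal (qnorm q ^ 2)) op_id).

Definition S_spectrum (T : operator) (q : quat) : Prop := ~ invertible (Rq q T).

Definition bd_S_spectrum (T : operator) (q : quat) : Prop :=
  forall eps, 0 < eps ->
    (exists p, qnorm (qsub p q) < eps /\ S_spectrum T p) /\
    (exists p, qnorm (qsub p q) < eps /\ ~ S_spectrum T p).

Definition B_S_bd (T : operator) (q : quat) : Prop := in_boundary_noninv (Rq q T).

Definition Rshift : operator :=
  fun x i => if Z.eq_dec i (-1)%Z then qzero else x (i + 1)%Z.

(* Main.v *)
Require Import Defs.
From Stdlib Require Import Reals ZArith Lia Lra Psatz Classical FunctionalExtensionality.
From Coquelicot Require Import Coquelicot.
Open Scope R_scope.

Definition ps (g : Z -> R) (n : nat) := sum_f_R0 (fun k => g (Z.of_nat k - Z.of_nat n)%Z) (2*n).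

Lemma ps_S g n : ps g (S n) = ps g n + g (- Z.of_nat (S n))%Z + g (Z.of_nat (S n)).
Proof.
unfold ps. replace (2 * S n)%nat with (S (S (2*n))) by lia.
rewrite tech5. rewrite decomp_sum by lia. change (Init.Nat.pred (S (2*n))) with (2*n)%nat. cbv beta.
rewrite (sum_eq (fun i => g (Z.of_nat (S i) - Z.of_nat (S n))%Z) (fun k => g (Z.of_nat k - Z.of_nat n)%Z)).
2: intros; f_equal; lia.
replace (Z.of_nat 0 - Z.of_nat (S n))%Z with (- Z.of_nat (S n))%Z by lia.
replace (Z.of_nat (S (S (2*n))) - Z.of_nat (S n))%Z with (Z.of_nat (S n)) by lia.
ring.
Qed.

Lemma ps_0 g : ps g 0 = g 0%Z.
Proof. reflexivity. Qed.

Lemma ps_comb g h1 h2 h3 a b c n :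
  (forall i, g i <= a * h1 i + b * h2 i + c * h3 i) ->
  ps g n <= a * ps h1 n + b * ps h2 n + c * ps h3 n.
Proof.
intros H. induction n.
- rewrite !ps_0. apply H.
- rewrite !ps_S. pose proof (H (- Z.of_nat (S n))%Z). pose proof (H (Z.of_nat (S n))). nra.
Qed.

Lemma ps_shiftp g n : ps g (S n) = ps (fun i => g (i+1)%Z) n + g (- Z.of_nat n)%Z + g (- Z.of_nat (S n))%Z.
Proof.
induction n.
- rewrite ps_S, !ps_0. simpl. ring.
- rewrite (ps_S g (S n)), (ps_S (fun i => g (i+1)%Z) n), IHn. cbv beta.
  replace (Z.of_nat (S n) + 1)%Z with (Z.of_nat (S (S n))) by lia.
  replace (- Z.of_nat (S n) + 1)%Z with (- Z.of_nat n)%Z by lia.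
  ring.
Qed.

Lemma ps_shiftm g n : ps g (S n) = ps (fun i => g (i-1)%Z) n + g (Z.of_nat n)%Z + g (Z.of_nat (S n))%Z.
Proof.
induction n.
- rewrite ps_S, !ps_0. simpl. ring.
- rewrite (ps_S g (S n)), (ps_S (fun i => g (i-1)%Z) n), IHn. cbv beta.
  replace (- Z.of_nat (S n) - 1)%Z with (- Z.of_nat (S (S n)))%Z by lia.
  replace (Z.of_nat (S n) - 1)%Z with (Z.of_nat n)%Z by lia.
  ring.
Qed.

Lemma ps_nonneg g n : (forall i, 0 <= g i) -> 0 <= ps g n.
Proof. intros H; induction n. rewrite ps_0; auto. rewrite ps_S. pose proof (H (- Z.of_nat (S n))%Z). pose proof (H (Z.of_nat (S n))). lra. Qed.

Lemma ps_incr g n : (forall i, 0 <= g i) -> ps g n <= ps g (S n).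
Proof. intros H. rewrite ps_S. pose proof (H (- Z.of_nat (S n))%Z). pose proof (H (Z.of_nat (S n))). lra. Qed.

Lemma qnorm2_nonneg q : 0 <= qnorm2 q.
Proof. unfold qnorm2; destruct q; simpl; nra. Qed.

Definition L (x : hseq) : R := real (Lim_seq (psum2 x)).
Definition l2b (x : hseq) (B : R) := forall n, psum2 x n <= B.

Lemma psum2_ps x n : psum2 x n = ps (fun i => qnorm2 (x i)) n.
Proof. reflexivity. Qed.

Lemma psum2_incr x n : psum2 x n <= psum2 x (S n).
Proof. rewrite !psum2_ps. apply ps_incr. intros; apply qnorm2_nonneg. Qed.

Lemma l2b_in x B : l2b x B -> in_l2 x /\ L x <= B.
Proof.
intros H.
assert (Hi : in_l2 x) by (apply (ex_finite_lim_seq_incr _ B); [apply psum2_incr | exact H]).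
split; auto. destruct Hi as [l Hl]. unfold L. rewrite (is_lim_seq_unique _ _ Hl). simpl.
pose proof (is_lim_seq_le (psum2 x) (fun _ => B) l B H Hl (is_lim_seq_const B)). simpl in H0. exact H0.
Qed.

Lemma in_l2b x : in_l2 x -> l2b x (L x) /\ 0 <= L x.
Proof.
intros [l Hl]. unfold L. rewrite (is_lim_seq_unique _ _ Hl). simpl.
pose proof (is_lim_seq_incr_compare _ _ Hl (psum2_incr x)).
split. exact H.
eapply Rle_trans; [| apply (H 0%nat)]. rewrite psum2_ps. apply ps_nonneg. intros; apply qnorm2_nonneg.
Qed.

Lemma l2b_comb z u v w a b c B1 B2 B3 : 0 <= a -> 0 <= b -> 0 <= c ->
  (forall i, qnorm2 (z i) <= a * qnorm2 (u i) + b * qnorm2 (v i) + c * qnorm2 (w i)) ->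
  l2b u B1 -> l2b v B2 -> l2b w B3 -> l2b z (a*B1 + b*B2 + c*B3).
Proof.
intros Ha Hb Hc H H1 H2 H3 n. rewrite psum2_ps.
eapply Rle_trans. apply (ps_comb _ (fun i => qnorm2 (u i)) (fun i => qnorm2 (v i)) (fun i => qnorm2 (w i))). exact H.
rewrite <- !psum2_ps. specialize (H1 n). specialize (H2 n). specialize (H3 n). nra.
Qed.

Lemma l2b_shiftp x B : l2b x B -> l2b (fun i => x (i+1)%Z) B.
Proof.
intros H n. rewrite psum2_ps. eapply Rle_trans; [| apply (H (S n))]. rewrite psum2_ps, ps_shiftp.
pose proof (qnorm2_nonneg (x (- Z.of_nat n)%Z)). pose proof (qnorm2_nonneg (x (- Z.of_nat (S n))%Z)). lra.
Qed.

Lemma l2b_shiftm x B : l2b x B -> l2b (fun i => x (i-1)%Z) B.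
Proof.
intros H n. rewrite psum2_ps. eapply Rle_trans; [| apply (H (S n))]. rewrite psum2_ps, ps_shiftm.
pose proof (qnorm2_nonneg (x (Z.of_nat n)%Z)). pose proof (qnorm2_nonneg (x (Z.of_nat (S n))%Z)). lra.
Qed.

Lemma l2b_zero : l2b (fun _ => qzero) 0.
Proof.
assert (E: qnorm2 qzero = 0) by (unfold qnorm2, qzero; simpl; ring).
intros n. rewrite psum2_ps. induction n. rewrite ps_0; cbv beta; rewrite E; lra.
rewrite ps_S; cbv beta; rewrite E in *. lra.
Qed.

Lemma l2b_norm x z A : in_l2 x -> 0 <= A -> l2b z (A * L x) -> in_l2 z /\ l2norm z <= sqrt A * l2norm x.
Proof.
intros Hx HA Hz. destruct (l2b_in _ _ Hz) as [Hi Hle]. split; auto.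
unfold l2norm. fold (L z). fold (L x). rewrite <- sqrt_mult_alt by auto. apply sqrt_le_1_alt. exact Hle.
Qed.

Lemma l2b_mono z B B' : l2b z B -> B <= B' -> l2b z B'.
Proof. intros H H' n. eapply Rle_trans; eauto. Qed.

Lemma qnorm_sq q : qnorm q ^ 2 = qnorm2 q.
Proof. unfold qnorm. apply pow2_sqrt, qnorm2_nonneg. Qed.

Lemma qnorm2_zero : qnorm2 qzero = 0.
Proof. unfold qnorm2, qzero; simpl; ring. Qed.

Lemma R_l2b x B : l2b x B -> l2b (Rshift x) B.
Proof.
intros H. eapply l2b_mono.
- apply (l2b_comb _ (fun i => x (i+1)%Z) (fun _ => qzero) (fun _ => qzero) 1 0 0 B 0 0); try lra.
  + intros i. unfold Rshift. destruct (Z.eq_dec i (-1)); rewrite qnorm2_zero;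
    pose proof (qnorm2_nonneg (x (i+1)%Z)); lra.
  + apply l2b_shiftp, H.
  + apply l2b_zero.
  + apply l2b_zero.
- lra.
Qed.

Lemma sq3 u v w : (u - v + w)^2 <= 3*u^2 + 3*v^2 + 3*w^2.
Proof. pose proof (pow2_ge_0 (u+v)). pose proof (pow2_ge_0 (v+w)). pose proof (pow2_ge_0 (u-w)). nra. Qed.
Lemma sq2 u v : (u + v)^2 <= 2*u^2 + 2*v^2.
Proof. pose proof (pow2_ge_0 (u-v)). nra. Qed.

Lemma qpt3 a b w c d :
  qnorm2 (qadd (qsub a (qmul (qreal c) b)) (qmul (qreal d) w)) <=
  3 * qnorm2 a + 3 * c^2 * qnorm2 b + 3 * d^2 * qnorm2 w.
Proof.
destruct a as [a0 a1 a2 a3], b as [b0 b1 b2 b3], w as [w0 w1 w2 w3].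
unfold qnorm2, qadd, qsub, qopp, qmul, qreal; simpl.
pose proof (sq3 a0 (c*b0) (d*w0)). pose proof (sq3 a1 (c*b1) (d*w1)).
pose proof (sq3 a2 (c*b2) (d*w2)). pose proof (sq3 a3 (c*b3) (d*w3)).
nra.
Qed.

Lemma qpt2 a b w c1 d1 c2 d2 :
  qnorm2 (qsub (qadd (qsub a (qmul (qreal c1) b)) (qmul (qreal d1) w))
               (qadd (qsub a (qmul (qreal c2) b)) (qmul (qreal d2) w))) <=
  2 * (c1 - c2)^2 * qnorm2 b + 2 * (d1 - d2)^2 * qnorm2 w.
Proof.
destruct a as [a0 a1 a2 a3], b as [b0 b1 b2 b3], w as [w0 w1 w2 w3].
unfold qnorm2, qadd, qsub, qopp, qmul, qreal; simpl.
pose proof (sq2 (-(c1-c2)*b0) ((d1-d2)*w0)). pose proof (sq2 (-(c1-c2)*b1) ((d1-d2)*w1)).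
pose proof (sq2 (-(c1-c2)*b2) ((d1-d2)*w2)). pose proof (sq2 (-(c1-c2)*b3) ((d1-d2)*w3)).
nra.
Qed.

Lemma Rsh_lin x y a : Rshift (sadd (rscal x a) y) = sadd (rscal (Rshift x) a) (Rshift y).
Proof.
apply functional_extensionality; intro i. unfold Rshift, sadd, rscal.
destruct (Z.eq_dec i (-1)); auto.
destruct a; unfold qadd, qmul, qzero; simpl; f_equal; ring.
Qed.

Lemma qlin A B A' B' X Y c d a :
  qadd (qsub (qadd (qmul A a) B) (qmul c (qadd (qmul A' a) B'))) (qmul d (qadd (qmul X a) Y)) =
  qadd (qmul (qadd (qsub A (qmul c A')) (qmul d X)) a) (qadd (qsub B (qmul c B')) (qmul d Y)).
Proof.
destruct A, B, A', B', X, Y, c, d, a; unfold qadd, qsub, qopp, qmul; simpl; f_equal; ring.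
Qed.

Lemma Rq_app p T x i : Rq p T x i =
  qadd (qsub (T (T x) i) (qmul (qreal (2 * Req p)) (T x i))) (qmul (qreal (qnorm p ^ 2)) (x i)).
Proof. reflexivity. Qed.

Lemma Rq_lin p x y a : Rq p Rshift (sadd (rscal x a) y) = sadd (rscal (Rq p Rshift x) a) (Rq p Rshift y).
Proof.
apply functional_extensionality; intro i. rewrite !Rq_app. rewrite !Rsh_lin.
unfold sadd, rscal. apply qlin.
Qed.

Lemma Rq_l2b p x B : l2b x B ->
  l2b (Rq p Rshift x) (3*B + 3*(2*Req p)^2*B + 3*(qnorm p ^2)^2*B).
Proof.
intros H. apply (l2b_comb _ (Rshift (Rshift x)) (Rshift x) x); try nra.
- intros i. rewrite Rq_app. apply qpt3.
- apply R_l2b, R_l2b, H.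
- apply R_l2b, H.
- exact H.
Qed.

Lemma Rq_bounded p : bounded_op (Rq p Rshift).
Proof.
split; [|split].
- intros x Hx. destruct (in_l2b x Hx) as [H1 H2]. apply (l2b_in _ _ (Rq_l2b p x _ H1)).
- intros; apply Rq_lin.
- exists (sqrt (3 + 3*(2*Req p)^2 + 3*(qnorm p ^2)^2)). split. apply sqrt_pos.
  intros x Hx. destruct (in_l2b x Hx) as [H1 H2].
  apply (l2b_norm x). exact Hx. nra.
  eapply l2b_mono. apply (Rq_l2b p x _ H1). nra.
Qed.

Lemma CS4 a0 a1 a2 a3 b0 b1 b2 b3 :
  (a0*b0+a1*b1+a2*b2+a3*b3)^2 <= (a0^2+a1^2+a2^2+a3^2)*(b0^2+b1^2+b2^2+b3^2).
Proof.
pose proof (pow2_ge_0 (a0*b1-a1*b0)). pose proof (pow2_ge_0 (a0*b2-a2*b0)).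
pose proof (pow2_ge_0 (a0*b3-a3*b0)). pose proof (pow2_ge_0 (a1*b2-a2*b1)).
pose proof (pow2_ge_0 (a1*b3-a3*b1)). pose proof (pow2_ge_0 (a2*b3-a3*b2)).
nra.
Qed.

Lemma real_cont p0 p1 p2 p3 q0 q1 q2 q3 eps :
  0 < eps ->
  let M := 1 + (q0^2+q1^2+q2^2+q3^2) in
  let del := Rmin 1 (eps / (8*M)) in
  (p0-q0)^2+(p1-q1)^2+(p2-q2)^2+(p3-q3)^2 < del^2 ->
  2*(2*p0 - 2*q0)^2 + 2*((p0^2+p1^2+p2^2+p3^2) - (q0^2+q1^2+q2^2+q3^2))^2 < eps^2.
Proof.
intros He M del H.
assert (HM : 1 <= M) by (unfold M; nra).
assert (Hd0 : 0 < del) by (unfold del; apply Rmin_glb_lt; [lra | apply Rdiv_lt_0_compat; lra]).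
assert (Hd1 : del <= 1) by apply Rmin_l.
assert (Hd2 : del <= eps / (8*M)) by apply Rmin_r.
assert (Hd3 : del * (8*M) <= eps).
{ apply (Rmult_le_compat_r (8*M)) in Hd2; [|lra]. unfold Rdiv in Hd2. rewrite Rmult_assoc, Rinv_l in Hd2; lra. }
set (H0 := (p0-q0)^2+(p1-q1)^2+(p2-q2)^2+(p3-q3)^2) in *.
assert (HH0 : 0 <= H0).
{ unfold H0. pose proof (pow2_ge_0 (p0-q0)). pose proof (pow2_ge_0 (p1-q1)). pose proof (pow2_ge_0 (p2-q2)). pose proof (pow2_ge_0 (p3-q3)). lra. }
assert (HA : (2*p0-2*q0)^2 <= 4*H0).
{ replace ((2*p0-2*q0)^2) with (4*(p0-q0)^2) by ring. unfold H0.
  pose proof (pow2_ge_0 (p1-q1)). pose proof (pow2_ge_0 (p2-q2)). pose proof (pow2_ge_0 (p3-q3)). lra. }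
assert (Hd : (p0^2+p1^2+p2^2+p3^2) - (q0^2+q1^2+q2^2+q3^2) =
   (p0-q0)*(p0-q0+2*q0)+(p1-q1)*(p1-q1+2*q1)+(p2-q2)*(p2-q2+2*q2)+(p3-q3)*(p3-q3+2*q3)) by ring.
pose proof (CS4 (p0-q0) (p1-q1) (p2-q2) (p3-q3) (p0-q0+2*q0) (p1-q1+2*q1) (p2-q2+2*q2) (p3-q3+2*q3)) as CS.
fold H0 in CS. rewrite <- Hd in CS.
assert (HS : (p0-q0+2*q0)^2+(p1-q1+2*q1)^2+(p2-q2+2*q2)^2+(p3-q3+2*q3)^2 <= 2*H0 + 8*(M-1)).
{ unfold H0, M.
  pose proof (sq2 (p0-q0) (2*q0)). pose proof (sq2 (p1-q1) (2*q1)).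
  pose proof (sq2 (p2-q2) (2*q2)). pose proof (sq2 (p3-q3) (2*q3)). nra. }
set (D := (p0^2+p1^2+p2^2+p3^2) - (q0^2+q1^2+q2^2+q3^2)) in *.
assert (Hdel2 : H0 < del^2) by exact H.
assert (H01 : H0 < 1) by nra.
assert (HD : D^2 <= H0 * (2 + 8*M)).
{ eapply Rle_trans. exact CS. apply Rmult_le_compat_l. lra. lra. }
assert (HX : 2*(2*p0 - 2*q0)^2 + 2*D^2 <= 28 * M * H0) by nra.
assert (HY : 28 * M * H0 < 28 * M * del^2) by nra.
assert (HZ : (del * (8*M))^2 <= eps^2) by (apply pow_incr; nra).
nra.
Qed.

Lemma Rq_dist_bound p q x : in_l2 x ->
  l2norm (op_sub (Rq p Rshift) (Rq q Rshift) x) <=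
  sqrt (2*(2*Req p - 2*Req q)^2 + 2*(qnorm p ^2 - qnorm q ^2)^2) * l2norm x.
Proof.
intros Hx. destruct (in_l2b x Hx) as [H1 H2].
pose proof (pow2_ge_0 (2*Req p - 2*Req q)). pose proof (pow2_ge_0 (qnorm p ^2 - qnorm q ^2)).
apply (l2b_norm x). exact Hx. lra.
eapply l2b_mono.
- apply (l2b_comb _ (Rshift x) x (fun _ => qzero) (2*(2*Req p - 2*Req q)^2) (2*(qnorm p ^2 - qnorm q ^2)^2) 0 (L x) (L x) 0); try nra.
  + intros i. unfold op_sub, ssub. rewrite !Rq_app. rewrite qnorm2_zero.
    eapply Rle_trans. apply qpt2. lra.
  + apply R_l2b, H1.
  + exact H1.
  + apply l2b_zero.
- nra.
Qed.

Lemma Rq_cont q eps : 0 < eps -> exists d0 : R, 0 < d0 /\ (forall p, qnorm (qsub p q) < d0 -> opdist_lt (Rq p Rshift) (Rq q Rshift) eps).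
Proof.
intros He. destruct q as [q0 q1 q2 q3].
assert (HM : 0 < 8*(1 + (q0^2+q1^2+q2^2+q3^2))) by nra.
exists (Rmin 1 (eps / (8*(1 + (q0^2+q1^2+q2^2+q3^2))))). split.
{ apply Rmin_glb_lt; [lra | apply Rdiv_lt_0_compat; lra]. }
intros p Hp.
exists (sqrt (2*(2*Req p - 2*Req (Quat q0 q1 q2 q3))^2 + 2*(qnorm p ^2 - qnorm (Quat q0 q1 q2 q3) ^2)^2)). split.
- assert (Hp2 : qnorm (qsub p (Quat q0 q1 q2 q3)) ^ 2 < (Rmin 1 (eps / (8*(1 + (q0^2+q1^2+q2^2+q3^2)))))^2).
  { assert (0 <= qnorm (qsub p (Quat q0 q1 q2 q3))) by apply sqrt_pos. nra. }
  rewrite qnorm_sq in Hp2. rewrite !qnorm_sq.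
  destruct p as [p0 p1 p2 p3]. unfold Req, qnorm2, qsub, qadd, qopp in *; simpl in *.
  rewrite <- (sqrt_pow2 eps) by lra. apply sqrt_lt_1_alt. split.
  + pose proof (pow2_ge_0 (2*p0 - 2*q0)). pose proof (pow2_ge_0 (p0 ^ 2 + p1 ^ 2 + p2 ^ 2 + p3 ^ 2 - (q0 ^ 2 + q1 ^ 2 + q2 ^ 2 + q3 ^ 2))). lra.
  + apply real_cont; auto.
- intros x Hx. apply Rq_dist_bound, Hx.
Qed.

Lemma part1 q : bd_S_spectrum Rshift q -> B_S_bd Rshift q.
Proof.
intros H. unfold B_S_bd, in_boundary_noninv. split; intros eps He;
  destruct (Rq_cont q eps He) as [d [Hd Hc]];
  destruct (H d Hd) as [[p1 [Hp1 S1]] [p2 [Hp2 S2]]].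
- exists (Rq p1 Rshift). split. apply Rq_bounded. split. exact S1. apply Hc, Hp1.
- exists (Rq p2 Rshift). split. apply Rq_bounded. split. unfold S_spectrum in S2; apply NNPP, S2. apply Hc, Hp2.
Qed.

Fixpoint qpow (p : quat) (n : nat) : quat :=
  match n with O => qreal 1 | S m => qmul p (qpow p m) end.

Definition kx (p : quat) : hseq := fun i => if Z_lt_dec i 0 then qzero else qpow p (Z.to_nat i).

Lemma qnorm2_mul a b : qnorm2 (qmul a b) = qnorm2 a * qnorm2 b.
Proof. destruct a, b; unfold qnorm2, qmul; simpl; ring. Qed.

Lemma qnorm2_pow p n : qnorm2 (qpow p n) = qnorm2 p ^ n.
Proof. induction n; simpl. unfold qnorm2, qreal; simpl; ring. rewrite qnorm2_mul, IHn. ring. Qed.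

Lemma kx_psum p n : psum2 (kx p) n = sum_f_R0 (fun k => qnorm2 p ^ k) n.
Proof.
induction n.
- rewrite psum2_ps, ps_0. unfold kx. destruct (Z_lt_dec 0 0); [lia|]. simpl. unfold qnorm2, qreal; simpl; ring.
- rewrite psum2_ps, ps_S, <- psum2_ps, IHn, tech5. unfold kx.
  destruct (Z_lt_dec (- Z.of_nat (S n)) 0); [|lia].
  destruct (Z_lt_dec (Z.of_nat (S n)) 0); [lia|].
  rewrite Nat2Z.id, qnorm2_zero, qnorm2_pow. ring.
Qed.

Lemma kx_l2 p : qnorm2 p < 1 -> in_l2 (kx p).
Proof.
intros Hp. apply (l2b_in _ (1 / (1 - qnorm2 p))). intros n. rewrite kx_psum, tech3 by lra.
pose proof (qnorm2_nonneg p).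
assert (0 <= qnorm2 p ^ S n) by (apply pow_le; auto).
unfold Rdiv. apply Rmult_le_compat_r. left; apply Rinv_0_lt_compat; lra. lra.
Qed.

Lemma qker p w : qadd (qsub (qmul p (qmul p w)) (qmul (qreal (2*Req p)) (qmul p w))) (qmul (qreal (qnorm p ^2)) w) = qzero.
Proof. rewrite qnorm_sq. destruct p, w; unfold qadd, qsub, qopp, qmul, qreal, qzero, Req, qnorm2; simpl; f_equal; ring. Qed.

Ltac qsolve := unfold qadd, qsub, qopp, qmul, qzero, qreal; simpl; f_equal; ring.

Lemma kx_ker p : Rq p Rshift (kx p) = (fun _ => qzero).
Proof.
apply functional_extensionality; intro i. rewrite Rq_app. unfold Rshift, kx.
repeat destruct (Z.eq_dec _ _); repeat destruct (Z_lt_dec _ _); try lia; try qsolve.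
replace (Z.to_nat (i+1+1)) with (S (S (Z.to_nat i))) by lia.
replace (Z.to_nat (i+1)) with (S (Z.to_nat i)) by lia.
simpl qpow. apply qker.
Qed.

Lemma zero_ker p : Rq p Rshift (fun _ => qzero) = (fun _ => qzero).
Proof.
apply functional_extensionality; intro i. rewrite Rq_app. unfold Rshift.
repeat destruct (Z.eq_dec _ _); qsolve.
Qed.

Lemma noninv T x y : in_l2 x -> in_l2 y -> T x = T y -> x <> y -> ~ invertible T.
Proof.
intros Hx Hy E N [S [_ HS]]. apply N. destruct (HS x Hx) as [H1 _]. destruct (HS y Hy) as [H2 _].
rewrite <- H1, <- H2, E. reflexivity.
Qed.

Lemma spec_small p : qnorm2 p < 1 -> ~ invertible (Rq p Rshift).
Proof.
intros Hp. apply (noninv _ (kx p) (fun _ => qzero)).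
- apply kx_l2, Hp.
- apply (l2b_in _ _ l2b_zero).
- rewrite kx_ker, zero_ker. reflexivity.
- intro E. apply (f_equal (fun f => qre (f 0%Z))) in E. unfold kx in E.
  destruct (Z_lt_dec 0 0); [lia|]. simpl in E. lra.
Qed.

Definition Te (e : R) : operator := fun x i =>
  if Z.eq_dec i (-2) then qmul (qreal e) (x 0%Z)
  else if Z.eq_dec i (-1) then qmul (qreal e) (x 1%Z) else x (i+2)%Z.
Definition Se (e : R) : operator := fun y j =>
  if Z.eq_dec j 0 then qmul (qreal (/e)) (y (-2)%Z)
  else if Z.eq_dec j 1 then qmul (qreal (/e)) (y (-1)%Z) else y (j-2)%Z.

Lemma qnorm2_scal c u : qnorm2 (qmul (qreal c) u) = c^2 * qnorm2 u.
Proof. rewrite qnorm2_mul. unfold qnorm2 at 1, qreal; simpl. ring. Qed.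

Lemma qlin2 c u a v : qmul c (qadd (qmul u a) v) = qadd (qmul (qmul c u) a) (qmul c v).
Proof. destruct c, u, a, v; unfold qadd, qmul; simpl; f_equal; ring. Qed.

Lemma qinv1 c u : c <> 0 -> qmul (qreal (/c)) (qmul (qreal c) u) = u.
Proof. intros; destruct u; unfold qmul, qreal; simpl; f_equal; field; auto. Qed.
Lemma qinv2 c u : c <> 0 -> qmul (qreal c) (qmul (qreal (/c)) u) = u.
Proof. intros; destruct u; unfold qmul, qreal; simpl; f_equal; field; auto. Qed.

Lemma Te_l2b e x B : l2b x B -> l2b (Te e x) ((1 + e^2) * B + 0 * 0 + 0 * 0).
Proof.
intros H. apply (l2b_comb _ (fun i => x (i+1+1)%Z) (fun _ => qzero) (fun _ => qzero)); try lra.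
- pose proof (pow2_ge_0 e); lra.
- intros i. rewrite qnorm2_zero. unfold Te.
  destruct (Z.eq_dec i (-2)); [|destruct (Z.eq_dec i (-1))].
  + subst. rewrite qnorm2_scal. simpl (-2+1+1)%Z. pose proof (qnorm2_nonneg (x 0%Z)). nra.
  + subst. rewrite qnorm2_scal. simpl (-1+1+1)%Z. pose proof (qnorm2_nonneg (x 1%Z)). nra.
  + replace (i+2)%Z with (i+1+1)%Z by lia. pose proof (qnorm2_nonneg (x (i+1+1)%Z)). pose proof (pow2_ge_0 e). nra.
- apply (l2b_shiftp (fun i => x (i+1)%Z)), l2b_shiftp, H.
- apply l2b_zero.
- apply l2b_zero.
Qed.

Lemma Se_l2b e x B : l2b x B -> l2b (Se e x) ((1 + (/e)^2) * B + 0 * 0 + 0 * 0).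
Proof.
intros H. apply (l2b_comb _ (fun i => x (i-1-1)%Z) (fun _ => qzero) (fun _ => qzero)); try lra.
- pose proof (pow2_ge_0 (/e)); lra.
- intros i. rewrite qnorm2_zero. unfold Se.
  destruct (Z.eq_dec i 0); [|destruct (Z.eq_dec i 1)].
  + subst. rewrite qnorm2_scal. simpl (0-1-1)%Z. pose proof (qnorm2_nonneg (x (-2)%Z)). nra.
  + subst. rewrite qnorm2_scal. simpl (1-1-1)%Z. pose proof (qnorm2_nonneg (x (-1)%Z)). nra.
  + replace (i-2)%Z with (i-1-1)%Z by lia. pose proof (qnorm2_nonneg (x (i-1-1)%Z)). pose proof (pow2_ge_0 (/e)). nra.
- apply (l2b_shiftm (fun i => x (i-1)%Z)), l2b_shiftm, H.
- apply l2b_zero.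
- apply l2b_zero.
Qed.

Lemma Te_bounded e : bounded_op (Te e).
Proof.
split; [|split].
- intros x Hx. destruct (in_l2b x Hx) as [H1 H2]. apply (l2b_in _ _ (Te_l2b e x _ H1)).
- intros x y a _ _. apply functional_extensionality; intro i. unfold Te, sadd, rscal.
  repeat destruct (Z.eq_dec _ _); auto; apply qlin2.
- exists (sqrt (1 + e^2)). split. apply sqrt_pos. intros x Hx. destruct (in_l2b x Hx) as [H1 H2].
  pose proof (pow2_ge_0 e).
  apply (l2b_norm x). exact Hx. lra. eapply l2b_mono. apply (Te_l2b e x _ H1). lra.
Qed.

Lemma Se_bounded e : bounded_op (Se e).
Proof.
split; [|split].
- intros x Hx. destruct (in_l2b x Hx) as [H1 H2]. apply (l2b_in _ _ (Se_l2b e x _ H1)).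
- intros x y a _ _. apply functional_extensionality; intro i. unfold Se, sadd, rscal.
  repeat destruct (Z.eq_dec _ _); auto; apply qlin2.
- exists (sqrt (1 + (/e)^2)). split. apply sqrt_pos. intros x Hx. destruct (in_l2b x Hx) as [H1 H2].
  pose proof (pow2_ge_0 (/e)).
  apply (l2b_norm x). exact Hx. lra. eapply l2b_mono. apply (Se_l2b e x _ H1). lra.
Qed.

Lemma Te_inv e : e <> 0 -> invertible (Te e).
Proof.
intros He. exists (Se e). split. apply Se_bounded. intros x _. split.
- apply functional_extensionality; intro j. unfold Se, Te.
  repeat destruct (Z.eq_dec _ _); try lia; subst; try (apply qinv1; auto); f_equal; lia.
- apply functional_extensionality; intro j. unfold Se, Te.
  repeat destruct (Z.eq_dec _ _); try lia; subst; try (apply qinv2; auto); f_equal; lia.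
Qed.

Lemma Rq0_app T x i : Rq qzero T x i = T (T x) i.
Proof.
rewrite Rq_app, qnorm_sq, qnorm2_zero. generalize (T (T x) i) (T x i) (x i).
intros [] [] []. unfold Req. qsolve.
Qed.

Lemma Te_dist e x : 0 < e -> in_l2 x -> l2norm (op_sub (Te e) (Rq qzero Rshift) x) <= sqrt (e^2) * l2norm x.
Proof.
intros He Hx. destruct (in_l2b x Hx) as [H1 H2].
apply (l2b_norm x). exact Hx. nra.
eapply l2b_mono.
- apply (l2b_comb _ (fun i => x (i+1+1)%Z) (fun _ => qzero) (fun _ => qzero) (e^2) 0 0 (L x) 0 0); try nra.
  + intros i. unfold op_sub, ssub. rewrite Rq0_app, !qnorm2_zero. unfold Te, Rshift.
    assert (Hs : forall u, qsub u qzero = u) by (intros [a0 a1 a2 a3]; unfold qsub, qadd, qopp, qzero; simpl; f_equal; ring).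
    assert (Hz : forall u, qnorm2 (qsub u u) = 0) by (intros []; unfold qnorm2, qsub, qadd, qopp; simpl; ring).
    destruct (Z.eq_dec i (-2)); [|destruct (Z.eq_dec i (-1))].
    * subst. simpl (-2+1+1)%Z. repeat destruct (Z.eq_dec _ _); try lia. rewrite Hs, qnorm2_scal. lra.
    * subst. simpl (-1+1+1)%Z. repeat destruct (Z.eq_dec _ _); try lia. rewrite Hs, qnorm2_scal. lra.
    * repeat destruct (Z.eq_dec _ _); try lia. replace (i+2)%Z with (i+1+1)%Z by lia. rewrite Hz.
      pose proof (qnorm2_nonneg (x (i+1+1)%Z)). nra.
  + apply (l2b_shiftp (fun i => x (i+1)%Z)), l2b_shiftp, H1.
  + apply l2b_zero.
  + apply l2b_zero.
- lra.
Qed.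

Lemma part2 : B_S_bd Rshift qzero /\ ~ bd_S_spectrum Rshift qzero.
Proof.
split.
- unfold B_S_bd, in_boundary_noninv. split; intros eps He.
  + exists (Rq qzero Rshift). split. apply Rq_bounded. split.
    apply spec_small. rewrite qnorm2_zero. lra.
    destruct (Rq_cont qzero eps He) as [d [Hd Hc]]. apply Hc.
    unfold qnorm. replace (qnorm2 (qsub qzero qzero)) with 0 by (unfold qnorm2, qsub, qadd, qopp, qzero; simpl; ring).
    rewrite sqrt_0. exact Hd.
  + exists (Te (eps/2)). split. apply Te_bounded. split. apply Te_inv. lra.
    exists (sqrt ((eps/2)^2)). split.
    * rewrite sqrt_pow2 by lra. lra.
    * intros x Hx. apply Te_dist. lra. exact Hx.
- intros H. destruct (H 1 Rlt_0_1) as [_ [p [Hp Hns]]]. apply Hns. unfold S_spectrum.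
  apply spec_small.
  assert (0 <= qnorm (qsub p qzero)) by apply sqrt_pos.
  assert (qnorm (qsub p qzero) ^ 2 < 1) by nra.
  rewrite qnorm_sq in H1. replace (qnorm2 p) with (qnorm2 (qsub p qzero)). exact H1.
  destruct p; unfold qnorm2, qsub, qadd, qopp, qzero; simpl; ring.
Qed.

Theorem mainTheorem15 :
  (forall q : quat, bd_S_spectrum Rshift q -> B_S_bd Rshift q) /\
  (exists q : quat, B_S_bd Rshift q /\ ~ bd_S_spectrum Rshift q).
Proof.
split. exact part1. exists qzero. exact part2.
Qed.
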